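(* Let $A$ be a finite nonempty subset of an abelian group $\mathbf{G}$ and let $k\geq 1$ be an integer. Then $$|A|^{2k}\le \mathsf{E}_k(A)\cdot \sigma_k(A-A),\qquad |A|^{4k}\le \mathsf{E}_{2k}(A)\cdot \mathsf{T}_k(A+A),$$ and $$|A|^{2k+4}\le \mathsf{E}_{k+2}(A)\cdot \mathsf{E}_k(A-A),\qquad |A|^{2k+4}\le \mathsf{E}_{k+2}(A)\cdot \mathsf{E}_k(A+A).$$
   Context: For finite $X\subseteq\mathbf{G}$ write $(X\circ X)(x)=|\{(a,b)\in X^2: b-a=x\}|$. For an integer $j\ge 2$, $\mathsf{E}_j(X)=\sum_{x\in\mathbf G}(X\circ X)(x)^j$, and $\mathsf{E}_1(X)=|X|^2$. $\sigma_k(X)=|\{(x_1,\dots,x_k)\in X^k: x_1+\dots+x_k=0\}|$. $\mathsf{T}_k(X)=|\{(x_1,\dots,x_k,x_1',\dots,x_k')\in X^{2k}: x_1+\dots+x_k=x_1'+\dots+x_k'\}|$. $A\pm A=\{a\pm b: a,b\in A\}$. *)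

(* Defs.v *)
From HB Require Import structures.
From mathcomp Require Import all_boot all_order all_algebra.
From mathcomp Require Import finmap.
Set Implicit Arguments. Unset Strict Implicit. Unset Printing Implicit Defensive.
Import GRing.Theory.
Local Open Scope fset_scope.
Local Open Scope ring_scope.

Definition sumset (G : zmodType) (A B : {fset G}) : {fset G} :=
  [fset a + b | a in A, b in B].
Definition diffset (G : zmodType) (A B : {fset G}) : {fset G} :=
  [fset a - b | a in A, b in B].

Definition repr_diff (G : zmodType) (X : {fset G}) (x : G) : nat :=
  #|[set p : X * X | val p.2 - val p.1 == x]|.

(* E_j(X) = sum_{x in G} (X o X)(x)^j ; the summand vanishes outside X - X
   (for j >= 1), so the sum is taken over X - X. For j = 1 this equals |X|^2. *)
Definition energy (G : zmodType) (j : nat) (X : {fset G}) : nat :=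
  (\sum_(x <- diffset X X) repr_diff X x ^ j)%N.

Definition sigma (G : zmodType) (k : nat) (X : {fset G}) : nat :=
  #|[set t : {ffun 'I_k -> X} | \sum_(i < k) val (t i) == 0]|.

Definition Tk (G : zmodType) (k : nat) (X : {fset G}) : nat :=
  #|[set p : {ffun 'I_k -> X} * {ffun 'I_k -> X} |
      \sum_(i < k) val (p.1 i) == \sum_(i < k) val (p.2 i)]|.

(* Main.v *)
From HB Require Import structures.
From mathcomp Require Import all_boot all_order all_algebra.
From mathcomp Require Import finmap zify.
Require Import Defs.
Import GRing.Theory.
Set Implicit Arguments. Unset Strict Implicit. Unset Printing Implicit Defensive.

Lemma amgm2 (a b : nat) : 2 * (a * b) <= a ^ 2 + b ^ 2.
Proof.
wlog h : a b / a <= b.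
  move=> W; case: (leqP a b) => [|/ltnW] h; first exact: W.
  by rewrite [a * b]mulnC addnC; apply: W.
rewrite -(subnKC h); move: (b - a) => d. nia.
Qed.

Lemma cs_nat (I : finType) (P : {pred I}) (x : I -> nat) :
  (\sum_(i in P) x i) ^ 2 <= #|P| * \sum_(i in P) x i ^ 2.
Proof.
rewrite -(leq_pmul2l (isT : 0 < 2)).
have -> : (\sum_(i in P) x i) ^ 2 = \sum_(i in P) \sum_(j in P) x i * x j.
  by rewrite -mulnn big_distrl /=; apply: eq_bigr => i _; rewrite big_distrr.
have -> : #|P| * \sum_(i in P) x i ^ 2 = \sum_(i in P) \sum_(j in P) x j ^ 2.
  by rewrite sum_nat_const.
have E : 2 * (\sum_(i in P) \sum_(j in P) x j ^ 2) =
   \sum_(i in P) \sum_(j in P) (x i ^ 2 + x j ^ 2).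
  rewrite mul2n -addnn; under [in RHS]eq_bigr do rewrite big_split /=.
  rewrite big_split /=; congr (_ + _); rewrite exchange_big /=.
  by apply: eq_bigr => i _; rewrite !sum_nat_const.
rewrite E big_distrr /=; apply: leq_sum => i _; rewrite big_distrr /=.
by apply: leq_sum => j _; apply: amgm2.
Qed.

Lemma cs_map (W T : finType) (g : W -> T) (P : {set T}) :
  (forall w, g w \in P) ->
  #|W| ^ 2 <= #|P| * #|[set p : W * W | g p.1 == g p.2]|.
Proof.
move=> gP.
pose n t := #|[set w | g w == t]|.
have E1 : #|W| = \sum_(t in P) n t.
  rewrite -sum1_card (partition_big g (mem P)) /=; last by move=> w _; apply: gP.
  by apply: eq_bigr => t _; rewrite /n -sum1_card; apply: eq_bigl => w; rewrite inE.
have E2 : #|[set p : W * W | g p.1 == g p.2]| = \sum_(t in P) n t ^ 2.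
  rewrite -sum1_card (partition_big (fun p : W * W => g p.1) (mem P)) /=;
    last by move=> w _; apply: gP.
  apply: eq_bigr => t _; rewrite /n -mulnn -cardsX -sum1_card.
  apply: eq_bigl => -[w1 w2]; rewrite !inE /=.
  by case: (g w1 =P t) => [->|]; rewrite ?andbT ?andbF // eq_sym.
by rewrite E1 E2; apply: cs_nat.
Qed.

Section Grp.
Variable G : zmodType.
Local Open Scope ring_scope.

Lemma part_seq (T : finType) (S : {set T}) (d : T -> G) (s : seq G) :
  uniq s -> (forall t, t \in S -> d t \in s) ->
  #|S| = (\sum_(c <- s) #|[set t in S | d t == c]|)%N.
Proof.
move=> us dS.
have -> : #|S| = (\sum_(t in S) \sum_(c <- s) (d t == c))%N.
  rewrite -sum1_card; apply: eq_bigr => t tS.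
  rewrite -big_mkcond /= sum1_count.
  have := count_uniq_mem (d t) us; rewrite dS //= => <-.
  by apply: eq_count => y; rewrite /= eq_sym.
rewrite [LHS](exchange_big_dep xpredT) //=; apply: eq_bigr => c _.
rewrite -sum1_card [LHS]big_mkcond [RHS]big_mkcond /=.
by apply: eq_bigr => t _; rewrite !inE; case: (t \in S); case: (d t == c).
Qed.

Definition sd (Y : {fset G}) (b : bool) (x y : Y) : G :=
  if b then val x - val y else val y - val x.

Lemma dmem (Y : {fset G}) (x y : Y) : val x - val y \in diffset Y Y.
Proof. by apply: (in_imfset2 _ (fun a b => a - b)); apply: valP. Qed.

Lemma smem (Y : {fset G}) (x y : Y) : val x + val y \in sumset Y Y.
Proof. by apply: (in_imfset2 _ (fun a b => a + b)); apply: valP. Qed.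

Lemma sd_mem (Y : {fset G}) b (x y : Y) : sd b x y \in diffset Y Y.
Proof. by case: b; apply: dmem. Qed.

Lemma coll_le (Y : {fset G}) (I : finType) (i0 : I) (m : I -> bool)
  (S : {set {ffun I -> Y} * {ffun I -> Y}}) :
  (forall pq, pq \in S -> forall i,
     sd (m i) (pq.1 i) (pq.2 i) = sd (m i0) (pq.1 i0) (pq.2 i0)) ->
  (#|S| <= energy #|I| Y)%N.
Proof.
move=> HS.
rewrite (@part_seq _ S (fun pq => sd (m i0) (pq.1 i0) (pq.2 i0)) (diffset Y Y));
  [|exact: fset_uniq|by move=> t _; apply: sd_mem].
rewrite /energy; apply: leq_sum => c _.
pose R := [set p : Y * Y | val p.2 - val p.1 == c].
have -> : repr_diff Y c = #|R| by [].
rewrite -card_ffun_on.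
pose phi (pq : {ffun I -> Y} * {ffun I -> Y}) : {ffun I -> Y * Y} :=
  [ffun i => if m i then (pq.2 i, pq.1 i) else (pq.1 i, pq.2 i)].
rewrite -(@card_in_imset _ _ phi); last first.
  move=> [p1 q1] [p2 q2] _ _ /= E.
  have E' : forall i, (p1 i, q1 i) = (p2 i, q2 i).
    move=> i; move/ffunP: E => /(_ i); rewrite !ffunE.
    by case: (m i) => /= -[]; intros; congruence.
  by congr (_, _); apply/ffunP => i; have [] := E' i.
apply: subset_leq_card; apply/subsetP => f /imsetP [pq].
rewrite inE => /andP [pqS /eqP dc] ->.
apply/ffun_onP => i; rewrite /phi ffunE inE -dc -(HS pq pqS i) /sd.
by case: (m i) => /=.
Qed.

Lemma L1 (x y x' y' : G) : x + y = x' + y' -> x' - x = y - y'.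
Proof.
by move=> h; rewrite -(addrK y' x') -h addrAC [x + y]addrC addrK.
Qed.

Lemma L2 (x y x' y' : G) : x - y = x' - y' -> x' - x = y' - y.
Proof.
by move=> h; rewrite -(subrK y' x') -h addrAC [x - y]addrC addrK addrC.
Qed.

Lemma L3 (x y z : G) : (x - z) - (x - y) = y - z.
Proof. by rewrite opprB addrC addrA subrK. Qed.

Lemma L4 (x y z : G) : (x + z) - (x + y) = z - y.
Proof. by rewrite opprD addrACA subrr add0r. Qed.

Lemma cyc_const (n : nat) (f : 'I_n.+1 -> G) :
  (forall i, f (ordS i) = f i) -> forall i, f i = f ord0.
Proof.
move=> h i.
suff H : forall j, (j < n.+1)%N -> f (inord j) = f ord0.
  by rewrite -[i]inord_val; apply: H.
elim=> [_|j IH lt]; first by congr f; apply: val_inj; rewrite /= inordK.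
have -> : inord j.+1 = ordS (inord j : 'I_n.+1).
  by apply: val_inj; rewrite /= !inordK ?modn_small // ltnW.
by rewrite h IH // ltnW.
Qed.
End Grp.

Local Open Scope ring_scope.

Lemma cardA (G : zmodType) (A : {fset G}) : #|{: A}| = #|` A|.
Proof. by rewrite -cardfE. Qed.

Lemma part1 (G : zmodType) (A : {fset G}) (n : nat) :
  (#|` A| ^ (2 * n.+1) <= energy n.+1 A * sigma n.+1 (diffset A A))%N.
Proof.
pose D := diffset A A.
pose g (a : {ffun 'I_n.+1 -> A}) : {ffun 'I_n.+1 -> D} :=
  [ffun i => FSetSub (dmem (a (ordS i)) (a i))].
pose P := [set t : {ffun 'I_n.+1 -> D} | \sum_(i < n.+1) val (t i) == 0].
have gP : forall a, g a \in P.
  move=> a; rewrite inE; apply/eqP.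
  under eq_bigr do rewrite ffunE /=.
  by rewrite sumrB [X in _ - X](reindex_inj (@ordS_inj n.+1)) subrr.
have := cs_map gP.
rewrite card_ffun card_ord cardA -expnM mulnC => H.
apply: (leq_trans H); rewrite mulnC; apply: leq_mul => //.
have := @coll_le G A 'I_n.+1 ord0 (fun _ => false)
  [set p : {ffun 'I_n.+1 -> A} * {ffun 'I_n.+1 -> A} | g p.1 == g p.2].
rewrite card_ord; apply=> -[a a']; rewrite inE /= => /eqP /ffunP E.
apply: (cyc_const (f := fun i => val (a' i) - val (a i))) => i.
have := E i; rewrite !ffunE => /(congr1 val) /= h.
by apply: L2.
Qed.

Lemma part2 (G : zmodType) (A : {fset G}) (n : nat) :
  (#|` A| ^ (4 * n.+1) <= energy (2 * n.+1) A * Tk n.+1 (sumset A A))%N.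
Proof.
pose S := sumset A A.
pose g (a : {ffun bool * 'I_n.+1 -> A}) :
    {ffun 'I_n.+1 -> S} * {ffun 'I_n.+1 -> S} :=
  ([ffun i => FSetSub (smem (a (false, i)) (a (true, i)))],
   [ffun i => FSetSub (smem (a (true, i)) (a (false, ordS i)))]).
pose P := [set p : {ffun 'I_n.+1 -> S} * {ffun 'I_n.+1 -> S} |
      \sum_(i < n.+1) val (p.1 i) == \sum_(i < n.+1) val (p.2 i)].
have gP : forall a, g a \in P.
  move=> a; rewrite inE; apply/eqP => /=.
  under eq_bigr do rewrite ffunE /=.
  under [RHS]eq_bigr do rewrite ffunE /=.
  rewrite !big_split /= addrC.
  by rewrite [X in _ + X = _](reindex_inj (@ordS_inj n.+1)).
have := cs_map gP.
rewrite card_ffun card_prod card_bool card_ord cardA -expnM.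
have -> : (2 * n.+1 * 2 = 4 * n.+1)%N by rewrite mulnC mulnA.
move=> H; apply: (leq_trans H); rewrite mulnC; apply: leq_mul => //.
have := @coll_le G A (bool * 'I_n.+1)%type (false, ord0) (fun j => j.1)
  [set p : {ffun bool * 'I_n.+1 -> A} * {ffun bool * 'I_n.+1 -> A} | g p.1 == g p.2].
rewrite card_prod card_bool card_ord; apply=> -[a a']; rewrite inE /=.
move=> /eqP [] /ffunP E1 /ffunP E2.
have e1 : forall i, val (a' (false, i)) - val (a (false, i)) =
                     val (a (true, i)) - val (a' (true, i)).
  by move=> i; have := E1 i; rewrite !ffunE => /(congr1 val) /= h; apply: L1.
have e2 : forall i, val (a' (false, ordS i)) - val (a (false, ordS i)) =
                     val (a (true, i)) - val (a' (true, i)).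
  move=> i; have := E2 i; rewrite !ffunE => /(congr1 val) /= h.
  by apply: L1; rewrite addrC h addrC.
have C := cyc_const (f := fun i => val (a' (false, i)) - val (a (false, i))).
have C' : forall i, val (a' (false, i)) - val (a (false, i)) =
                    val (a' (false, ord0)) - val (a (false, ord0)).
  by apply: C => i /=; rewrite e2 e1.
move=> [[] i] /=; rewrite /sd /=; last exact: C'.
by rewrite -e1 C'.
Qed.

Lemma part3 (G : zmodType) (A : {fset G}) (n : nat) :
  (#|` A| ^ (2 * n.+1 + 4) <= energy (n.+1 + 2) A * energy n.+1 (diffset A A))%N.
Proof.
pose D := diffset A A.
pose I := option (option 'I_n.+1).
pose g (a : {ffun I -> A}) : {ffun 'I_n.+1 -> D} * {ffun 'I_n.+1 -> D} :=
  ([ffun i => FSetSub (dmem (a (Some (Some i))) (a None))],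
   [ffun i => FSetSub (dmem (a (Some (Some i))) (a (Some None)))]).
pose P := [set pq : {ffun 'I_n.+1 -> D} * {ffun 'I_n.+1 -> D} |
   [forall i, sd false (pq.1 i) (pq.2 i) == sd false (pq.1 ord0) (pq.2 ord0)]].
have gP : forall a, g a \in P.
  by move=> a; rewrite inE; apply/forallP => i; rewrite /sd /= !ffunE /= !L3.
have cI : #|{: I}| = (n.+1 + 2)%N by rewrite !card_option card_ord addn2.
have := cs_map gP.
rewrite card_ffun cI cardA -expnM.
have -> : ((n.+1 + 2) * 2 = 2 * n.+1 + 4)%N by rewrite mulnC mulnDr.
move=> H; apply: (leq_trans H); rewrite mulnC; apply: leq_mul.
  rewrite -cI; apply: (@coll_le G A I None (fun _ => false)) => -[a a'].
  rewrite inE /= => /eqP [] /ffunP E1 /ffunP E2.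
  have e1 : forall i, val (a' (Some (Some i))) - val (a (Some (Some i))) =
                      val (a' None) - val (a None).
    by move=> i; have := E1 i; rewrite !ffunE => /(congr1 val) /= h; apply: L2.
  have e2 : forall i, val (a' (Some (Some i))) - val (a (Some (Some i))) =
                      val (a' (Some None)) - val (a (Some None)).
    by move=> i; have := E2 i; rewrite !ffunE => /(congr1 val) /= h; apply: L2.
  rewrite /sd /=; case=> [[i|]|] //; first exact: e1.
  by rewrite -(e2 ord0) e1.
rewrite -[X in (_ <= energy X _)%N]card_ord.
apply: (@coll_le G D 'I_n.+1 ord0 (fun _ => false)) => pq.
by rewrite inE => /forallP H1 i; apply/eqP; apply: H1.
Qed.

Lemma part4 (G : zmodType) (A : {fset G}) (n : nat) :
  (#|` A| ^ (2 * n.+1 + 4) <= energy (n.+1 + 2) A * energy n.+1 (sumset A A))%N.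
Proof.
pose S := sumset A A.
pose I := option (option 'I_n.+1).
pose g (a : {ffun I -> A}) : {ffun 'I_n.+1 -> S} * {ffun 'I_n.+1 -> S} :=
  ([ffun i => FSetSub (smem (a (Some (Some i))) (a None))],
   [ffun i => FSetSub (smem (a (Some (Some i))) (a (Some None)))]).
pose P := [set pq : {ffun 'I_n.+1 -> S} * {ffun 'I_n.+1 -> S} |
   [forall i, sd false (pq.1 i) (pq.2 i) == sd false (pq.1 ord0) (pq.2 ord0)]].
have gP : forall a, g a \in P.
  by move=> a; rewrite inE; apply/forallP => i; rewrite /sd /= !ffunE /= !L4.
have cI : #|{: I}| = (n.+1 + 2)%N by rewrite !card_option card_ord addn2.
have := cs_map gP.
rewrite card_ffun cI cardA -expnM.
have -> : ((n.+1 + 2) * 2 = 2 * n.+1 + 4)%N by rewrite mulnC mulnDr.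
move=> H; apply: (leq_trans H); rewrite mulnC; apply: leq_mul.
  rewrite -cI.
  apply: (@coll_le G A I None (fun j => if j is Some (Some _) then false else true)) => -[a a'].
  rewrite inE /= => /eqP [] /ffunP E1 /ffunP E2.
  have e1 : forall i, val (a' (Some (Some i))) - val (a (Some (Some i))) =
                      val (a None) - val (a' None).
    by move=> i; have := E1 i; rewrite !ffunE => /(congr1 val) /= h; apply: L1.
  have e2 : forall i, val (a' (Some (Some i))) - val (a (Some (Some i))) =
                      val (a (Some None)) - val (a' (Some None)).
    by move=> i; have := E2 i; rewrite !ffunE => /(congr1 val) /= h; apply: L1.
  rewrite /sd /=; case=> [[i|]|] //; first exact: e1.
  by rewrite -(e2 ord0) e1.
rewrite -[X in (_ <= energy X _)%N]card_ord.
apply: (@coll_le G S 'I_n.+1 ord0 (fun _ => false)) => pq.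
by rewrite inE => /forallP H1 i; apply/eqP; apply: H1.
Qed.

Close Scope ring_scope.
Unset Implicit Arguments.
Local Open Scope fset_scope.

Theorem lemma3 (G : zmodType) (A : {fset G}) (k : nat) :
  A != fset0 -> (1 <= k)%N ->
  [/\ (#|` A| ^ (2 * k) <= energy k A * sigma k (diffset A A))%N,
      (#|` A| ^ (4 * k) <= energy (2 * k) A * Tk k (sumset A A))%N,
      (#|` A| ^ (2 * k + 4) <= energy (k + 2) A * energy k (diffset A A))%N &
      (#|` A| ^ (2 * k + 4) <= energy (k + 2) A * energy k (sumset A A))%N].
Proof.
move=> _; case: k => // n _.
split; [exact: part1 | exact: part2 | exact: part3 | exact: part4].
Qed.
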